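(* Over a field of characteristic $0$, write $[a,b]=ab-ba$ and $\{a,b\}=ab+ba$. An algebra is left-symmetric and satisfies $a(bc)+b(ac)+a(cb)+c(ab)+b(ca)+c(ba)=0$ if and only if, in terms of $[\cdot,\cdot]$ and $\{\cdot,\cdot\}$, it satisfies \[ [[a,b],c]+[[b,c],a]+[[c,a],b]=0, \] \[ \{\{a,b\},c\}=-\{[a,b],c\}-2\{[a,c],b\}+[\{a,b\},c]-[[a,c],b]+\{a,\{b,c\}\}-\{a,[b,c]\}+[a,\{b,c\}], \] and \[ \{a,\{b,c\}\}=\{[a,b],c\}+\{[a,c],b\}+[\{b,c\},a]+\tfrac23[[a,c],b]+\tfrac13[a,[b,c]]. \]
   Context: A left-symmetric algebra is an algebra whose associator $(a,b,c)=(ab)c-a(bc)$ satisfies $(a,b,c)=(b,a,c)$. The statement is the polarization (Markl–Remm) of this variety. *)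

(* Defs.v *)
From HB Require Import structures.
From mathcomp Require Import all_boot all_order all_algebra.
Set Implicit Arguments. Unset Strict Implicit. Unset Printing Implicit Defensive.
Import GRing.Theory.
Local Open Scope ring_scope.

Definition bilinear_mul (K : fieldType) (V : lmodType K) (mul : V -> V -> V) :=
  (forall (k : K) (x y z : V), mul (k *: x + y) z = k *: mul x z + mul y z) /\
  (forall (k : K) (x y z : V), mul x (k *: y + z) = k *: mul x y + mul x z).

Definition lbr (K : fieldType) (V : lmodType K) (mul : V -> V -> V) (a b : V) :=
  mul a b - mul b a.
Definition acbr (K : fieldType) (V : lmodType K) (mul : V -> V -> V) (a b : V) :=
  mul a b + mul b a.

Definition assoc (K : fieldType) (V : lmodType K) (mul : V -> V -> V) (a b c : V) :=
  mul (mul a b) c - mul a (mul b c).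

Definition left_symmetric (K : fieldType) (V : lmodType K) (mul : V -> V -> V) :=
  forall a b c : V, assoc mul a b c = assoc mul b a c.

(* Main.v *)
Require Import Defs.
From HB Require Import structures.
From mathcomp Require Import all_boot all_order all_algebra.
From mathcomp Require Import ring.
Import GRing.Theory.
Local Open Scope ring_scope.

Section Lin.
Variables (K : fieldType) (V : lmodType K).

Inductive lexp := LAt (n : nat) | LAdd (a b : lexp) | LOpp (a : lexp)
  | LScale (k : K) (a : lexp) | LZero.

Fixpoint leval (env : seq V) (e : lexp) : V :=
  match e with
  | LAt n => nth 0 env n
  | LAdd a b => leval env a + leval env b
  | LOpp a => - leval env a
  | LScale k a => k *: leval env a
  | LZero => 0
  end.

Fixpoint lcoef (e : lexp) (n : nat) : K :=
  match e with
  | LAt m => if Nat.eqb m n then 1 else 0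
  | LAdd a b => lcoef a n + lcoef b n
  | LOpp a => - lcoef a n
  | LScale k a => k * lcoef a n
  | LZero => 0
  end.

Lemma leval_sum env e :
  leval env e = \sum_(i < size env) lcoef e i *: nth 0 env i.
Proof.
elim: e => [n|a IHa b IHb|a IHa|k a IHa|] /=.
- have eqb_ne : forall i : 'I_(size env), val i != n -> Nat.eqb n i = false.
    by move=> i Hi; apply/PeanoNat.Nat.eqb_neq => E; move: Hi; rewrite E eqxx.
  case: (ltnP n (size env)) => Hn.
  + rewrite (bigD1 (Ordinal Hn)) //= big1 ?addr0.
      have -> : Nat.eqb n n = true by apply/PeanoNat.Nat.eqb_eq.
      by rewrite scale1r.
    move=> i Hi; have Hne : val i != n by apply: contra Hi => /eqP E; apply/eqP/val_inj.
    by rewrite eqb_ne // scale0r.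

  + rewrite nth_default // big1 // => i _.
    rewrite eqb_ne ?scale0r //; apply/eqP => E.
    by move: (ltn_ord i); rewrite E ltnNge Hn.
- by rewrite IHa IHb -big_split /=; apply: eq_bigr => i _; rewrite scalerDl.
- by rewrite IHa -sumrN; apply: eq_bigr => i _; rewrite scaleNr.
- by rewrite IHa scaler_sumr; apply: eq_bigr => i _; rewrite scalerA.
- by rewrite big1 // => i _; rewrite scale0r.
Qed.

Lemma leval0 env e :
  foldr and True [seq lcoef e i = 0 | i <- iota 0 (size env)] ->
  leval env e = 0.
Proof.
move=> H; rewrite leval_sum big1 // => i _.
suff -> : lcoef e i = 0 by rewrite scale0r.
have : (nat_of_ord i \in iota 0 (size env)) by rewrite mem_iota /= ltn_ord.
elim: (iota 0 (size env)) H => //= j s IH [Hj Hs].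
by rewrite in_cons => /orP [/eqP ->|/IH]; [| apply].
Qed.

Lemma lstep (x P Q : V) (c : K) : P = Q -> x - c *: (P - Q) = 0 -> x = 0.
Proof. by move=> ->; rewrite subrr scaler0 subr0. Qed.

End Lin.
Arguments leval {K V}. Arguments lstep {K V x P Q}. Arguments lcoef {K}. Arguments LAt {K}. Arguments LAdd {K}. Arguments LOpp {K}. Arguments LScale {K}. Arguments LZero {K}.

Ltac lookup t env :=
  match env with
  | cons t _ => constr:(0%N)
  | cons _ ?r => let n := lookup t r in constr:(S n)
  | nil => idtac "LOOKUP FAIL" t; fail
  end.

Ltac reify env t :=
  lazymatch t with
  | (?a + ?b)%R => let ra := reify env a in let rb := reify env b in
                   constr:(LAdd ra rb)
  | (- ?a)%R => let ra := reify env a in constr:(LOpp ra)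
  | (?k *: ?a)%R => let ra := reify env a in constr:(LScale k ra)
  | 0%R => open_constr:(@LZero _)
  | _ => let n := lookup t env in open_constr:(@LAt _ n)
  end.

Definition mons (K : fieldType) (V : lmodType K) (mul : V -> V -> V) (a b c : V) :=
  [:: mul a (mul b c); mul a (mul c b); mul b (mul a c); mul b (mul c a);
      mul c (mul a b); mul c (mul b a);
      mul (mul a b) c; mul (mul a c) b; mul (mul b a) c; mul (mul b c) a;
      mul (mul c a) b; mul (mul c b) a].

Arguments mons {K V}.

Ltac lin_close mul a b c :=
  let env := eval cbv delta [mons] beta in (mons mul a b c) in
  lazymatch goal with
  | |- ?x = 0 => let e := reify env x in
       change (leval env e = 0); apply: leval0;
       cbn [lcoef Nat.eqb map iota foldr size]
  end.

Theorem mainTheorem15 (K : fieldType) (V : lmodType K) (mul : V -> V -> V) :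
  [pchar K] =i pred0 ->
  bilinear_mul mul ->
  (left_symmetric mul /\
   (forall a b c : V,
      mul a (mul b c) + mul b (mul a c) + mul a (mul c b)
      + mul c (mul a b) + mul b (mul c a) + mul c (mul b a) = 0))
  <->
  (forall a b c : V,
     [/\ lbr mul (lbr mul a b) c + lbr mul (lbr mul b c) a
           + lbr mul (lbr mul c a) b = 0,
         acbr mul (acbr mul a b) c =
           - acbr mul (lbr mul a b) c - 2%:R *: acbr mul (lbr mul a c) b
           + lbr mul (acbr mul a b) c - lbr mul (lbr mul a c) b
           + acbr mul a (acbr mul b c) - acbr mul a (lbr mul b c)
           + lbr mul a (acbr mul b c)
       & acbr mul a (acbr mul b c) =
           acbr mul (lbr mul a b) c + acbr mul (lbr mul a c) b
           + lbr mul (acbr mul b c) a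
           + (2%:R / 3%:R) *: lbr mul (lbr mul a c) b
           + (1 / 3%:R) *: lbr mul a (lbr mul b c)]).
Proof.
move=> /pcharf0P hc [hDl hDr].
have mul0l z : mul 0 z = 0.
  have := hDl 1 0 0 z; rewrite scaler0 addr0 scale1r => E.
  have : mul 0 z + 0 = mul 0 z + mul 0 z by rewrite addr0.
  by move/addrI.
have mul0r z : mul z 0 = 0.
  have := hDr 1 z 0 0; rewrite scaler0 addr0 scale1r => E.
  have : mul z 0 + 0 = mul z 0 + mul z 0 by rewrite addr0.
  by move/addrI.
have mulDl x y z : mul (x + y) z = mul x z + mul y z.
  by have := hDl 1 x y z; rewrite !scale1r.
have mulDr x y z : mul z (x + y) = mul z x + mul z y.
  by have := hDr 1 z x y; rewrite !scale1r.
have mulNl x z : mul (- x) z = - mul x z.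
  by have := hDl (-1) x 0 z; rewrite addr0 mul0l addr0 !scaleN1r.
have mulNr x z : mul z (- x) = - mul z x.
  by have := hDr (-1) z x 0; rewrite addr0 mul0r addr0 !scaleN1r.
split.
- move=> [LS S] a b c; split.
  + apply: subr0_eq.
    apply: (lstep 1 (LS a b c)); apply: (lstep (-1) (LS a c b)); apply: (lstep 1 (LS b c a)).
    rewrite /assoc /lbr /acbr !(mulDl, mulDr, mulNl, mulNr).
    lin_close mul a b c; repeat split; field; rewrite ?hc //.
  + apply: subr0_eq.
    apply: (lstep 1 (LS a b c)); apply: (lstep 3%:R (LS a c b)); apply: (lstep 1 (LS b c a)).
    rewrite /assoc /lbr /acbr !(mulDl, mulDr, mulNl, mulNr).
    lin_close mul a b c; repeat split; field; rewrite ?hc //.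
  + apply: subr0_eq.
    apply: (lstep (-1) (LS a b c)); apply: (lstep (-(5%:R/3%:R)) (LS a c b));
    apply: (lstep (1/3%:R) (LS b c a)); apply: (lstep (2%:R/3%:R) (S a b c)).
    rewrite /assoc /lbr /acbr !(mulDl, mulDr, mulNl, mulNr).
    lin_close mul a b c; repeat split; field; rewrite ?hc //.
- move=> H; split.
  + move=> a b c; have [T1abc T2abc T3abc] := H a b c; have [T1acb T2acb T3acb] := H a c b.
    apply: subr0_eq.
    apply: (lstep (1/4%:R) T1abc); apply: (lstep (1/4%:R) T2acb).
    rewrite /assoc /lbr /acbr !(mulDl, mulDr, mulNl, mulNr).
    lin_close mul a b c; repeat split; field; rewrite ?hc //.
  + move=> a b c; have [T1abc T2abc T3abc] := H a b c; have [T1acb T2acb T3acb] := H a c b.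
    apply: (lstep (-(1/2%:R)) T1abc); apply: (lstep (1/2%:R) T2abc);
    apply: (lstep (1/2%:R) T2acb); apply: (lstep (3%:R/2%:R) T3abc).
    rewrite /assoc /lbr /acbr !(mulDl, mulDr, mulNl, mulNr).
    lin_close mul a b c; repeat split; field; rewrite ?hc //.
Qed.
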